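(* Let $I$ be a compact metric space, $\mu$ a non-negative finite Borel measure on $I$, $N\ge2$ and $N'\le N$ natural numbers, and $s:\mathcal{G}\to[0,\infty)$ a surplus function. Define $S:I^{N!}\to\mathbb{R}$ by $S(i_1,\dots,i_{N!})=\hat s([i_1,\dots,i_{N!}])$ and $\hat{\mathcal{U}}=\{u\in L^1(I,\mu):\sum_{k=1}^{N!}u(i_k)\ge(N-1)!\,S(i_1,\dots,i_{N!})\ \forall i_1,\dots,i_{N!}\in I\}$, $\mathcal{U}_n=\{u\in L^1(I,\mu):\sum_{k=1}^nu(i_k)\ge s([i_1,\dots,i_n])\ \forall i_1,\dots,i_n\in I\}$ for $N'\le n\le N$, and $\mathcal{U}=\{u\in L^1(I,\mu):\sum_{i\in G}u(i)\ge s(G)\ \forall G\in\mathcal{G}\}$. Then $\hat{\mathcal{U}}=\mathcal{U}=\bigcap_{n=N'}^N\mathcal{U}_n$.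
   Context: For $n\in\mathbb{N}$, $I^n/\sim_n$ is the quotient of $I^n$ by permutation of coordinates, classes written $[i_1,\dots,i_n]$; $\mathcal{G}_n=I^n/\sim_n$ (multisets of size $n$) and $\mathcal{G}=\bigcup_{n=N'}^N\mathcal{G}_n$; $s_n=s|_{\mathcal{G}_n}$. For $G=[i_1,\dots,i_n]$, $\sum_{i\in G}u(i)=\sum_{k=1}^nu(i_k)$. For $N'\le n\le N$, $K_n\subset I^{N!}/\sim_{N!}$ is the set of classes $[i_1,\dots,i_{N!}]$ such that for each $i\in I$, $|\{k:i_k=i\}|$ is divisible by $N!/n$; $P_n:K_n\to\mathcal{G}_n$ sends $[\underbrace{j_1,\dots,j_1}_{N!/n},\dots,\underbrace{j_n,\dots,j_n}_{N!/n}]$ to $[j_1,\dots,j_n]$. $\hat s_n=s_n\circ P_n$ on $K_n$ and $0$ off $K_n$; $\hat s=\max_{N'\le n\le N}\frac{N}{n}\hat s_n$. *)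

(* Defs.v *)
From HB Require Import structures.
From mathcomp Require Import all_boot all_order all_algebra all_fingroup.
From mathcomp Require Import all_classical all_reals all_analysis.
Set Implicit Arguments. Unset Strict Implicit. Unset Printing Implicit Defensive.
Import Order.TTheory GRing.Theory Num.Theory.
Local Open Scope ring_scope.
Local Open Scope classical_set_scope.

(* A (nonempty, i.e. pointed) metric space: measurable types in
   MathComp-Analysis are always pointed. *)
#[short(type="pointedMetricType")]
HB.structure Definition PointedMetric (K : numDomainType) :=
  {T of Pointed T & Metric K T}.

Definition borel (R : realType) (I : pointedMetricType R) :=
  g_sigma_algebraType (@open I).

(* Multisets of size n ([i_1,...,i_n] in I^n/~_n) are represented by
   n-tuples ('I_n -> I); a function on multisets is a function on tuples
   invariant under permutations of the coordinates. *)
Definition sym_fun (I : Type) (R : Type) (n : nat) (f : ('I_n -> I) -> R) :=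
  forall (sigma : 'S_n) (y : 'I_n -> I), f (y \o sigma) = f y.

Definition msum (R : realType) (I : Type) (u : I -> R) (n : nat)
  (y : 'I_n -> I) : R := \sum_(k < n) u (y k).

(* x : I^{N!} is (a representative of) the class
   [j_1,...,j_1, ..., j_n,...,j_n] (each j_k repeated N!/n times):
   there is a map f : 'I_(N!) -> 'I_n with x = y o f whose fibres all
   have cardinality N!/n.  This says exactly that [x] \in K_n and
   P_n [x] = [y_0,...,y_{n-1}]. *)
Definition replicates (I : Type) (N n : nat) (y : 'I_n -> I)
  (x : 'I_(N`!) -> I) : Prop :=
  exists f : 'I_(N`!) -> 'I_n,
    (forall k, x k = y (f k)) /\
    (forall j : 'I_n, #|[set k | f k == j]| = (N`! %/ n)%N).

Arguments replicates {I} N {n} y x.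

(* \hat s_n = s_n o P_n on K_n, and 0 off K_n. *)
Definition shat_n (R : realType) (I : Type) (N : nat)
  (s : forall n : nat, ('I_n -> I) -> R) (n : nat) (x : 'I_(N`!) -> I) : R :=
  match pselect (exists y : 'I_n -> I, replicates N y x) with
  | left h => s n (projT1 (cid h))
  | right _ => 0
  end.

Arguments shat_n {R I} N s n x.

(* \hat s = max_{N' <= n <= N} (N/n) \hat s_n  (the terms are >= 0 when s >= 0,
   so taking 0 as the neutral element of the max does not change it). *)
Definition shat (R : realType) (I : Type) (N' N : nat)
  (s : forall n : nat, ('I_n -> I) -> R) (x : 'I_(N`!) -> I) : R :=
  \big[Num.max/0]_(N' <= n < N.+1) (N%:R / n%:R * shat_n N s n x).

Arguments shat {R I} N' N s x.

Definition Uhat (R : realType) (I : pointedMetricType R) (N' N : nat)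
  (mu : {measure set (borel I) -> \bar R})
  (s : forall n : nat, ('I_n -> I) -> R) : set (I -> R) :=
  [set u | mu.-integrable [set: borel I] (fun x => (u x)%:E) /\
    forall x : 'I_(N`!) -> I,
      (N.-1)`!%:R * shat N' N s x <= msum u x].

Definition U_n (R : realType) (I : pointedMetricType R)
  (mu : {measure set (borel I) -> \bar R})
  (s : forall n : nat, ('I_n -> I) -> R) (n : nat) : set (I -> R) :=
  [set u | mu.-integrable [set: borel I] (fun x => (u x)%:E) /\
    forall y : 'I_n -> I, s n y <= msum u y].

(* U : constraint for every G in \mathcal G = \bigcup_{n=N'}^N G_n *)
Definition U (R : realType) (I : pointedMetricType R) (N' N : nat)
  (mu : {measure set (borel I) -> \bar R})
  (s : forall n : nat, ('I_n -> I) -> R) : set (I -> R) :=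
  [set u | mu.-integrable [set: borel I] (fun x => (u x)%:E) /\
    forall n : nat, (N' <= n <= N)%N -> forall y : 'I_n -> I, s n y <= msum u y].

(* Main.v *)
Require Import Defs.
From HB Require Import structures.
From mathcomp Require Import all_boot all_order all_algebra all_fingroup.
From mathcomp Require Import all_classical all_reals all_analysis.
Import Order.TTheory GRing.Theory Num.Theory.
Local Open Scope ring_scope.

Lemma fib_exists N n : (0 < n)%N -> (n <= N)%N ->
  exists f : 'I_(N`!) -> 'I_n, forall j : 'I_n,
     #|[pred k | f k == j]| = (N`! %/ n)%N.
Proof.
move=> n0 nN; set m := (N`! %/ n)%N.
have H : N`! = #|{: 'I_n * 'I_m}|.
  by rewrite card_prod !card_ord mulnC divnK // dvdn_fact // n0.
pose g k := enum_val (cast_ord H k).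
pose g' p := cast_ord (esym H) (enum_rank p).
have gK : cancel g g' by move=> k; rewrite /g /g' enum_valK cast_ordK.
have g'K : cancel g' g by move=> p; rewrite /g /g' cast_ordKV enum_rankK.
exists (fun k => (g k).1) => j.
have -> : #|[pred k | (g k).1 == j]| = #|[set g k | k in [pred k | (g k).1 == j]]|.
  by rewrite card_imset //; apply: can_inj gK.
have -> : [set g k | k in [pred k | (g k).1 == j]] = finset.setX [set j] [set: 'I_m].
  apply/setP => p; rewrite !inE andbT; apply/imsetP/idP.
    by case=> k /= Hk ->.
  move=> Hp; exists (g' p); rewrite ?inE /= g'K /= //.
by rewrite finset.cardsX cards1 cardsT card_ord mul1n.
Qed.

Lemma rep_exists (I : Type) N n (y : 'I_n -> I) : (0 < n)%N -> (n <= N)%N ->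
  exists f : 'I_(N`!) -> 'I_n, replicates N y (y \o f).
Proof.
move=> n0 nN; have [f Hf] := fib_exists _ _ n0 nN.
exists f; exists f; split => // j; rewrite -(Hf j); apply: eq_card => k.
rewrite unfold_in /in_set /=; by apply/asboolP/idP.
Qed.
Local Open Scope classical_set_scope.

Lemma fibre_sum (V : nmodType) p n (f : 'I_p -> 'I_n) c (F : 'I_n -> V) :
  (forall j, #|[set k | f k == j]| = c) ->
  \sum_(k < p) F (f k) = \sum_(j < n) F j *+ c.
Proof.
move=> Hf; rewrite (partition_big f xpredT) //=; apply: eq_bigr => j _.
rewrite (eq_bigr (fun _ => F j)); last by move=> k /eqP->.
rewrite sumr_const -(Hf j); congr (_ *+ _); apply: eq_card => k; rewrite unfold_in /in_set /=; by apply/idP/asboolP.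
Qed.

Lemma fibre_sumn p n (f : 'I_p -> 'I_n) c (F : 'I_n -> nat) :
  (forall j, #|[set k | f k == j]| = c) ->
  (\sum_(k < p) F (f k) = \sum_(j < n) F j * c)%N.
Proof.
move=> Hf; rewrite (partition_big f xpredT) //=; apply: eq_bigr => j _.
rewrite (eq_bigr (fun _ => F j)); last by move=> k /eqP->.
rewrite sum_nat_const -(Hf j) mulnC; congr (_ * _)%N; apply: eq_card => k; rewrite unfold_in /in_set /=; by apply/idP/asboolP.
Qed.

Lemma count_mktuple (T : eqType) n (y : 'I_n -> T) (a : pred T) :
  count a (mktuple y) = (\sum_(j < n) a (y j))%N.
Proof.
rewrite -sum1_count big_mkcond /= big_map big_enum /=.
by apply: eq_bigr => j _; case: (a (y j)).
Qed.

Lemma rep_perm (T : eqType) N n (y y' : 'I_n -> T) (x : 'I_(N`!) -> T) :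
  (0 < N`! %/ n)%N ->
  replicates N y x -> replicates N y' x -> exists sigma : 'S_n, y' = y \o sigma.
Proof.
move=> m0 [f [Hx Hf]] [f' [Hx' Hf']].
have : perm_eq (mktuple y') (mktuple y).
  apply/seq.permP => a; rewrite !count_mktuple.
  apply/eqP; rewrite -(eqn_pmul2r m0); apply/eqP.
  rewrite !big_distrl /= -(fibre_sumn _ _ _ _ (fun j => (a (y j) : nat)) Hf).
  rewrite -(fibre_sumn _ _ _ _ (fun j => (a (y' j) : nat)) Hf').
  by apply: eq_bigr => k _; rewrite -Hx -Hx'.
case/tuple_permP => sigma Hs; exists sigma; apply/funext => i /=.
have Ht := val_inj Hs. by rewrite -[y' i](tnth_mktuple y') Ht !tnth_mktuple.
Qed.

Lemma msum_rep (R : realType) (I : Type) (u : I -> R) N n (y : 'I_n -> I) x :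
  replicates N y x -> Defs.msum u x = Defs.msum u y *+ (N`! %/ n).
Proof.
case=> f [Hx Hf]; rewrite /Defs.msum.
rewrite (eq_bigr (fun k => (u \o y) (f k))); last by move=> k _; rewrite Hx.
by rewrite (fibre_sum _ _ _ _ _ (u \o y) Hf) sumrMnl.
Qed.

Lemma coef_eq (R : realType) N n : (0 < n)%N -> (n <= N)%N -> (0 < N)%N ->
  (N.-1)`!%:R * (N%:R / n%:R) = (N`! %/ n)%:R :> R.
Proof.
move=> n0 nN N0; rewrite natf_div; last by rewrite dvdn_fact // n0.
by rewrite -(prednK N0) factS prednK // natrM mulrA [_ * N%:R]mulrC.
Qed.

Theorem lemma6 (R : realType) (I : pointedMetricType R)
  (mu : {measure set (borel I) -> \bar R})
  (N' N : nat) (s : forall n : nat, ('I_n -> I) -> R) :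
  compact [set: I] ->
  (mu [set: borel I] < +oo)%E ->
  (2 <= N)%N -> (1 <= N')%N -> (N' <= N)%N ->
  (forall n, (N' <= n <= N)%N -> sym_fun (s n)) ->
  (forall n, (N' <= n <= N)%N -> forall y : 'I_n -> I, 0 <= s n y) ->
  Uhat N' N mu s = U N' N mu s /\
  U N' N mu s = \bigcap_(n in [set n : nat | (N' <= n <= N)%N]) U_n mu s n.
Proof.
move=> _ _ N2 N'1 N'N Hsym Hs0.
have N0 : (0 < N)%N by apply: leq_trans N2.
have Hr : forall n, (N' <= n <= N)%N -> [/\ (0 < n)%N, (n <= N)%N & (0 < N`! %/ n)%N].
  move=> n /andP[h1 h2]; have n0 : (0 < n)%N by apply: leq_trans h1.
  split => //; rewrite divn_gt0 //; apply: leq_trans h2 (fact_geq _).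
have c0 : 0 < (N.-1)`!%:R :> R by rewrite ltr0n fact_gt0.
split; last first.
  apply/seteqP; split => u.
    by case=> Hi Hu n Hn; split => //; apply: Hu.
  move=> Hb; split; first by case: (Hb N) => //; rewrite /= N'N leqnn.
  by move=> n Hn y; case: (Hb n Hn).
apply/seteqP; split => u [Hi Hu]; split => //.
- move=> n Hn y; have [n0 nN m0] := Hr n Hn.
  have [f Hf] := rep_exists _ _ _ y n0 nN.
  have H1 := Hu (y \o f).
  have Heq : shat_n N s n (y \o f) = s n y.
    rewrite /shat_n; case: pselect => [h|[]]; last by exists y.
    have := projT2 (cid h); set y' := projT1 (cid h) => H'.
    have [sigma ->] := rep_perm _ _ _ _ _ _ m0 Hf H'.
    by rewrite (Hsym n Hn).
  have H2 : (N.-1)`!%:R * (N%:R / n%:R * s n y) <= Defs.msum u (y \o f).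
    apply: le_trans H1; rewrite ler_wpM2l ?ler0n //.
    rewrite -Heq /shat.
    apply: (le_bigmax_seq _ n (fun _ => true) (fun n => N%:R / n%:R * shat_n N s n (y \o f))) => //.
    by rewrite mem_index_iota ltnS.
  move: H2; rewrite mulrA coef_eq // (msum_rep _ _ u _ _ _ _ Hf) -[Defs.msum u y *+ _]mulr_natl.
  by rewrite ler_pM2l // ltr0n.
- have u0 : forall i, 0 <= u i.
    move=> i; have := Hu N _ (fun _ => i); rewrite /= N'N leqnn => /(_ isT) H.
    have := le_trans (Hs0 N _ (fun _ => i)) H; rewrite /= N'N leqnn => /(_ isT).
    by rewrite /Defs.msum sumr_const card_ord pmulrn_lge0.
  move=> x; have S0 : 0 <= Defs.msum u x by apply: sumr_ge0 => k _.
  rewrite mulrC -ler_pdivlMr //.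
  rewrite /shat big_nat_cond; apply: bigmax_le; first by rewrite divr_ge0 // ltW.
  move=> n; rewrite andbT ltnS => Hn; have [n0 nN m0] := Hr n Hn.
  rewrite ler_pdivlMr // /shat_n; case: pselect => [h|_]; last by rewrite mulr0 mul0r.
  have := projT2 (cid h); set y' := projT1 (cid h) => H'.
  rewrite (msum_rep _ _ u _ _ _ _ H') mulrC mulrA coef_eq // -[Defs.msum u y' *+ _]mulr_natl ler_pM2l ?ltr0n //.
  by apply: Hu; rewrite Hn.
Qed.
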